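(* Let $g^{ij}(u)=\sum_{s,k}\frac{1-\delta^{sk}}{p_sp_k}\frac{\partial u_i}{\partial p_s}\frac{\partial u_j}{\partial p_k}$, viewed as a polynomial in $u_1,\dots,u_n$. The Lie derivative of this intersection form with respect to the vector field $\frac{\partial}{\partial u_{n-1}}$ is given by $$\eta^{ij}(u)=\frac{\partial g^{ij}}{\partial u_{n-1}}(u)=4(2n-i-j)\,u_{i+j-n-1},\qquad i,j=1,\dots,n.$$ Hence $\eta^{ij}(u)$ is a non-degenerate Hankel matrix with all entries above the anti-diagonal vanishing; in particular the anti-diagonal entries are $\eta^{i,n-i+1}(u)=4(n-1)$.
   Context: $n\ge2$. $u_k=\sum_{1\le i_1<\dots<i_k\le n}p_{i_1}^2\cdots p_{i_k}^2$ for $k=1,\dots,n$; conventions $u_0=1$ and $u_k=0$ for $k<0$ and $k>n$. ''Above the anti-diagonal'' means entries with $i+j<n+1$. *)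

(* Defs.v *)
From HB Require Import structures.
From mathcomp Require Import all_boot all_order all_algebra.
From mathcomp Require Export mpoly.
Set Implicit Arguments. Unset Strict Implicit. Unset Printing Implicit Defensive.
Import Order.TTheory GRing.Theory Num.Theory.
Local Open Scope ring_scope.

Section Defs.
Variable R : numFieldType.
Variable n : nat.

(* u_k as a polynomial in p_1..p_n (variables 'X_0..'X_(n-1)):
   u_k = sum_{|S| = k} prod_{s in S} p_s^2, with u_k = 0 for k < 0
   (for k = 0 this is 1, for k > n it is 0 automatically). *)
Definition u_poly (k : int) : {mpoly R[n]} :=
  match k with
  | Posz k' => \sum_(S : {set 'I_n} | #|S| == k') \prod_(s in S) 'X_s ^+ 2
  | Negz _ => 0
  end.

(* The point (u_1(p), ..., u_n(p)) ; coordinate m : 'I_n is u_(m+1). *)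
Definition uvec (p : 'I_n -> R) : 'I_n -> R :=
  fun m => (u_poly (m.+1)%:Z).@[p].

Definition gfun (i j : nat) (p : 'I_n -> R) : R :=
  \sum_(s < n) \sum_(k < n)
    (1 - (s == k)%:R) / (p s * p k)
      * ((u_poly i%:Z)^`M(s)).@[p] * ((u_poly j%:Z)^`M(k)).@[p].

(* The variable u_k in the polynomial ring in u_1..u_n (variable 'X_m is
   u_(m+1)), with the conventions u_0 = 1 and u_k = 0 for k < 0 or k > n. *)
Definition Uvar (k : int) : {mpoly R[n]} :=
  if k == 0 then 1 else \sum_(m : 'I_n | (m.+1)%:Z == k) 'X_m.

Definition eta_formula (i j : nat) : {mpoly R[n]} :=
  (4 * (2 * n - i - j)%N)%:R *: Uvar (i%:Z + j%:Z - n%:Z - 1).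

End Defs.

Lemma nm2_lt (n : nat) (hn : (2 <= n)%N) : (n - 2 < n)%N.
Proof. by rewrite ltn_subrL; case: n hn => [|[|n]]. Qed.

(* The index of the variable u_(n-1) (0-based index n-2). *)
Definition ord_nm1 (n : nat) (hn : (2 <= n)%N) : 'I_n := Ordinal (nm2_lt hn).

(* Main.v *)
Require Import Defs.
From HB Require Import structures.
From mathcomp Require Import all_boot all_order all_algebra.
From mathcomp Require Import mpoly.
Import Order.TTheory GRing.Theory Num.Theory.
Local Open Scope ring_scope.

From mathcomp Require Import ring zify.
From mathcomp Require Import fingroup perm.

Section Sets.
Variable R : comRingType.
Variable n : nat.
Variable q : 'I_n -> R.

Definition esum (k : nat) : R :=
  \sum_(S : {set 'I_n} | #|S| == k) \prod_(s in S) q s.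
Definition esub (s : 'I_n) (k : nat) : R :=
  \sum_(S : {set 'I_n} | (#|S| == k) && (s \notin S)) \prod_(t in S) q t.

Lemma reindex_s (s : 'I_n) k (F : {set 'I_n} -> R) :
  \sum_(S : {set 'I_n} | (#|S| == k.+1) && (s \in S)) F S =
  \sum_(T : {set 'I_n} | (#|T| == k) && (s \notin T)) F (s |: T).
Proof.
rewrite (reindex_onto (fun T => s |: T) (fun S => S :\ s)) /=; last first.
  by move=> S /andP[_ sS]; rewrite setD1K.
apply: eq_bigl => T; rewrite in_setU1 eqxx /=.
case sT: (s \in T) => /=; last first.
  by rewrite setU1K ?sT // cardsU1 sT eqxx andbT.
rewrite andbT andbF; apply/negbTE; apply/negP => /andP[_ /eqP hT].
by move: sT; rewrite -hT !inE eqxx.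
Qed.

Lemma esum0 : esum 0 = 1.
Proof.
rewrite /esum (big_pred1 set0) ?big_set0 // => S /=.
by rewrite cards_eq0.
Qed.

Lemma esub0 s : esub s 0 = 1.
Proof.
rewrite /esub (big_pred1 set0) ?big_set0 // => S /=.
rewrite cards_eq0; case: eqP => // ->; by rewrite inE.
Qed.

Lemma esumS s k : esum k.+1 = esub s k.+1 + q s * esub s k.
Proof.
rewrite /esum (bigID (fun S : {set 'I_n} => s \in S)) /= addrC; congr (_ + _).
rewrite reindex_s /esub mulr_sumr; apply: eq_bigr => T /andP[_ sT].
by rewrite big_setU1.
Qed.

Lemma esum_gt k : (n < k)%N -> esum k = 0.
Proof.
move=> hk; rewrite /esum big_pred0 // => S.
apply/negbTE; apply/eqP => hS; move: (max_card S); rewrite card_ord hS.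
by rewrite leqNgt hk.
Qed.

Lemma esub_sum k : \sum_s esub s k = ((n%:Z - k%:Z)%:~R) * esum k.
Proof.
rewrite /esub.
have -> : \sum_s \sum_(S : {set 'I_n} | (#|S| == k) && (s \notin S)) \prod_(t in S) q t
   = \sum_(S : {set 'I_n} | #|S| == k) \sum_(s | s \notin S) \prod_(t in S) q t.
  rewrite (exchange_big_dep (fun S : {set 'I_n} => #|S| == k)) /=; last first.
    by move=> s S _ /andP[].
  by apply: eq_bigr => S hS; apply: eq_bigl => s; rewrite hS.
rewrite /esum mulr_sumr; apply: eq_bigr => S /eqP hS.
rewrite sumr_const.
have -> : #|[pred s | s \notin S]| = #|~: S|.
  by apply: eq_card => x; rewrite !inE.
have hc := cardsC S; rewrite card_ord in hc.
rewrite -mulr_natl; congr (_ * _).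
have -> : (n%:Z - k%:Z) = (#|~: S|)%:Z by lia.
by [].
Qed.


Lemma esubS s k : esub s k.+1 = esum k.+1 - q s * esub s k.
Proof. by rewrite (esumS s) addrK. Qed.

Definition Dsum a b := \sum_s esub s a * esub s b.

Lemma Dsum_rec a b : Dsum a.+1 b =
  (n%:Z - b%:Z)%:~R * esum a.+1 * esum b - (n%:Z - a%:Z)%:~R * esum a * esum b.+1
  + Dsum a b.+1.
Proof.
have h s : esub s a.+1 * esub s b =
  esum a.+1 * esub s b - esum b.+1 * esub s a + esub s a * esub s b.+1.
  by rewrite !esubS; ring.
rewrite /Dsum (eq_bigr _ (fun s _ => h s)) big_split /= sumrB -!mulr_sumr !esub_sum.
ring.
Qed.

Lemma Dsum_closed a b : Dsum a b =
  (n%:Z - b%:Z)%:~R * esum a * esum b +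
  \sum_(t < a) (a%:Z - b%:Z - 2 * t.+1%:Z)%:~R * esum (a - t.+1) * esum (b + t.+1).
Proof.
elim: a b => [|a IH] b.
  rewrite big_ord0 addr0 esum0 mulr1 /Dsum -esub_sum.
  by apply: eq_bigr => s _; rewrite esub0 mul1r.
rewrite Dsum_rec IH big_ord_recl /= subn1 /= addn1.
have -> : \sum_(i < a) (a.+1%:Z - b%:Z - 2 * (bump 0 i).+1%:Z)%:~R * esum (a.+1 - (bump 0 i).+1)
    * esum (b + (bump 0 i).+1) =
  \sum_(t < a) (a%:Z - b.+1%:Z - 2 * t.+1%:Z)%:~R * esum (a - t.+1) * esum (b.+1 + t.+1).
  apply: eq_bigr => t _; rewrite /bump /= add1n subSS addSnnS; congr (_ * _ * _).
  congr (_%:~R); lia.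
have -> : (a.+1%:Z - b%:Z - 2 * 1%:Z)%:~R = (n%:Z - b.+1%:Z)%:~R - (n%:Z - a%:Z)%:~R :> R.
  by rewrite -rmorphB /=; congr (_%:~R); lia.
ring.
Qed.

End Sets.
Arguments esum {R n} q k.
Arguments esub {R n} q s k.
Arguments Dsum {R n} q a b.

Section Poly.
Variable R : numFieldType.
Variable n : nat.
Implicit Types p : 'I_n -> R.

Definition sq p := fun i => p i ^+ 2.

Lemma u_poly_eval p k : (u_poly R n k%:Z).@[p] = esum (sq p) k.
Proof.
rewrite /u_poly /esum raddf_sum /=; apply: eq_bigr => S _.
rewrite rmorph_prod /=; apply: eq_bigr => s _.
by rewrite rmorphXn /= mevalXU.
Qed.

Lemma mderivXU_neq (s t : 'I_n) : t != s -> ('X_t : {mpoly R[n]})^`M(s) = 0.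
Proof.
move=> ts; rewrite mderivX mnm1E (negbTE ts) scale0r //.
Qed.

Lemma mderivXU_eq (s : 'I_n) : ('X_s : {mpoly R[n]})^`M(s) = 1.
Proof.
rewrite mderivX mnm1E eqxx scale1r.
have -> : (U_(s) - U_(s))%MM = 0%MM by apply/mnmP => i; rewrite mnmBE subnn mnm0E.
by rewrite mpolyX0.
Qed.

Lemma dprod0 (s : 'I_n) (S : {set 'I_n}) : s \notin S ->
  (\prod_(t in S) ('X_t : {mpoly R[n]}) ^+ 2)^`M(s) = 0.
Proof.
move=> sS; apply: (big_ind (fun P : {mpoly R[n]} => P^`M(s) = 0)).
- by rewrite -mpolyC1 mderivC.
- by move=> x y hx hy; rewrite mderivM hx hy mul0r mulr0 addr0.
- move=> t tS; have ts : t != s by apply: contraNneq sS => <-.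
  by rewrite expr2 mderivM mderivXU_neq // mul0r mulr0 addr0.
Qed.

Lemma u_poly_deriv_eval p k (s : 'I_n) :
  ((u_poly R n k.+1%:Z)^`M(s)).@[p] = 2 * p s * esub (sq p) s k.
Proof.
rewrite /u_poly [X in X.@[_]]raddf_sum /= (bigID (fun S : {set 'I_n} => s \in S)) /=.
rewrite [X in _ + X]big1 ?addr0; last by move=> S /andP[_ sS]; rewrite dprod0.
rewrite reindex_s raddf_sum /= /esub mulr_sumr; apply: eq_bigr => T /andP[_ sT].
rewrite big_setU1 //= mderivM dprod0 // mulr0 addr0 expr2 mderivM mderivXU_eq.
rewrite mul1r mulr1 mevalM mevalD mevalXU rmorph_prod /=.
congr (_ * _); first by rewrite mulr2n mulrDl !mul1r.
by apply: eq_bigr => t _; rewrite rmorphXn /= mevalXU.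
Qed.

Lemma u_poly0_deriv (s : 'I_n) : (u_poly R n 0%:Z)^`M(s) = 0.
Proof.
rewrite /u_poly (big_pred1 set0) ?big_set0; first by rewrite -mpolyC1 mderivC.
by move=> S /=; rewrite cards_eq0.
Qed.

End Poly.
Arguments sq {R n} p i.

Section G.
Variable R : numFieldType.
Variable n : nat.
Implicit Types p : 'I_n -> R.

Lemma sum_offdiag (A B : 'I_n -> R) :
  \sum_s \sum_k (1 - (s == k)%:R) * (A s * B k) =
  (\sum_s A s) * (\sum_k B k) - \sum_s A s * B s.
Proof.
rewrite mulr_suml -sumrB; apply: eq_bigr => s _.
rewrite (bigD1 s) //= eqxx subrr mul0r add0r.
rewrite [X in _ = _ * X - _](bigD1 s) //= mulrDr addrAC subrr add0r mulr_sumr.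
apply: eq_bigr => k hk; by rewrite eq_sym (negbTE hk) subr0 mul1r.
Qed.

Lemma gfun_eval p a b : (forall s, p s != 0) ->
  gfun a.+1 b.+1 p = 4 * ((n%:Z - a%:Z)%:~R * esum (sq p) a * ((n%:Z - b%:Z)%:~R * esum (sq p) b)
     - Dsum (sq p) a b).
Proof.
move=> hp; rewrite /gfun.
have h s k : (1 - (s == k)%:R) / (p s * p k) * ((u_poly R n a.+1%:Z)^`M(s)).@[p]
      * ((u_poly R n b.+1%:Z)^`M(k)).@[p] =
   4 * ((1 - (s == k)%:R) * (esub (sq p) s a * esub (sq p) k b)).
  rewrite !u_poly_deriv_eval; field.
  by rewrite !hp.
transitivity (\sum_s \sum_k 4 * ((1 - (s == k)%:R) * (esub (sq p) s a * esub (sq p) k b))).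
  by apply: eq_bigr => s _; apply: eq_bigr => k _; exact: h.
under eq_bigr => s _ do rewrite -mulr_sumr.
by rewrite -mulr_sumr sum_offdiag !esub_sum.
Qed.


Definition Uv k := Uvar R n k%:Z.

Lemma Uv_eval p k : (Uv k).@[uvec p] = esum (sq p) k.
Proof.
case: k => [|k]; first by rewrite /Uv /Uvar eqxx meval1 esum0.
rewrite /Uv /Uvar /=; case: (ltnP k n) => hk.
  rewrite (big_pred1 (Ordinal hk)) => [|m]; last first.
    by rewrite /= eqz_nat eqSS -val_eqE.
  by rewrite mevalXU /uvec u_poly_eval.
rewrite big_pred0 => [|m]; last first.
  by rewrite /= eqz_nat eqSS; apply/negbTE; rewrite neq_ltn (leq_trans (ltn_ord m) hk).
by rewrite meval0 esum_gt.
Qed.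

Definition cA a b : R := (((n%:Z - a%:Z) * (n%:Z - b%:Z) - (n%:Z - b%:Z))%:~R).
Definition cT a b (t : nat) : R := ((b%:Z - a%:Z + 2 * t.+1%:Z)%:~R).

Definition Hp a b : {mpoly R[n]} :=
  (4 : R) *: (cA a b *: (Uv a * Uv b) +
     \sum_(t < a) cT a b t *: (Uv (a - t.+1) * Uv (b + t.+1))).

Lemma Hp_eval p a b : (Hp a b).@[uvec p] =
  4 * (cA a b * esum (sq p) a * esum (sq p) b +
     \sum_(t < a) cT a b t * esum (sq p) (a - t.+1) * esum (sq p) (b + t.+1)).
Proof.
rewrite /Hp mevalZ mevalD mevalZ mevalM !Uv_eval raddf_sum /= mulrA.
congr (_ * (_ + _)); apply: eq_bigr => t _.
by rewrite mevalZ mevalM !Uv_eval mulrA.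
Qed.

Lemma gfun_Hp p a b : (forall s, p s != 0) ->
  gfun a.+1 b.+1 p = (Hp a b).@[uvec p].
Proof.
move=> hp; rewrite gfun_eval // Dsum_closed Hp_eval.
have -> : \sum_(t < a) cT a b t * esum (sq p) (a - t.+1) * esum (sq p) (b + t.+1) =
  - \sum_(t < a) (a%:Z - b%:Z - 2 * t.+1%:Z)%:~R * esum (sq p) (a - t.+1) * esum (sq p) (b + t.+1).
  rewrite -sumrN; apply: eq_bigr => t _; rewrite -!mulNr -rmorphN /cT.
  by congr (_%:~R * _ * _); lia.
rewrite /cA !rmorphB !rmorphM /=.
ring.
Qed.

End G.

Lemma baseD_inj (D k : nat) (f g : 'I_k -> nat) :
  (forall i, f i < D)%N -> (forall i, g i < D)%N ->
  (\sum_(i < k) D ^ i * f i = \sum_(i < k) D ^ i * g i)%N -> f =1 g.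
Proof.
elim: k f g => [|k IH] f g hf hg; first by move=> _ [].
rewrite !big_ord_recl /= !expn0 !mul1n.
have eS (h : 'I_k.+1 -> nat) : (\sum_(i < k) D ^ (bump 0 i) * h (lift ord0 i) =
     D * \sum_(i < k) D ^ i * h (lift ord0 i))%N.
  by rewrite big_distrr /=; apply: eq_bigr => i _; rewrite /bump /= add1n expnS mulnA.
rewrite !eS => e.
have e0 : f ord0 = g ord0.
  have := congr1 (fun x => x %% D)%N e; rewrite /= !(addnC (f ord0)) !(addnC (g ord0)).
  rewrite ![(D * _)%N]mulnC !modnMDl !modn_small //.
have Dp : (0 < D)%N by apply: leq_ltn_trans (hf ord0).
move: e; rewrite e0 => /addnI /eqP; rewrite eqn_pmul2l // => /eqP e.
have := IH (fun i => f (lift ord0 i)) (fun i => g (lift ord0 i)) (fun i => hf _) (fun i => hg _) e.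
move=> hl i; case: (unliftP ord0 i) => [j ->|->] //; exact: hl.
Qed.

Section Kron.
Variable R : numFieldType.
Variable n : nat.

Definition kr (D : nat) (m : 'X_{1..n}) : nat := (\sum_(i < n) D ^ i * m i)%N.

Lemma kron_zero (Q : {mpoly R[n]}) (xs : nat -> R) : injective xs ->
  (forall c, Q.@[fun i => xs c ^+ (msize Q ^ i)] = 0) -> Q = 0.
Proof.
move=> xinj hQ; set D := msize Q.
pose P : {poly R} := \sum_(m <- msupp Q) Q@_m *: 'X^(kr D m).
have hP x : P.[x] = Q.@[fun i => x ^+ (D ^ i)].
  rewrite mevalE /P horner_sum; apply: eq_bigr => m _.
  rewrite hornerZ hornerXn; congr (_ * _).
  rewrite /kr -prodrXr; apply: eq_bigr => i _; by rewrite exprM.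
have P0 : P = 0.
  apply/eqP; apply/negPn/negP => nzP.
  have hr : all (root P) (map xs (iota 0 (size P))).
    by apply/allP => x /mapP[c _ ->]; rewrite /root hP hQ.
  have hu : uniq (map xs (iota 0 (size P))) by rewrite map_inj_uniq // iota_uniq.
  by have := max_poly_roots nzP hr hu; rewrite size_map size_iota ltnn.
apply/eqP; rewrite -msupp_eq0; apply/eqP.
case e: (msupp Q) => [|m0 s] //.
have m0in : m0 \in msupp Q by rewrite e inE eqxx.
have hlt (m : 'X_{1..n}) i : m \in msupp Q -> (m i < D)%N.
  move=> min; apply: leq_ltn_trans (msize_mdeg_lt min).
  rewrite mdegE (bigD1 i) //=; exact: leq_addr.
have := congr1 (fun P : {poly R} => P`_(kr D m0)) P0.
rewrite /P coef_sum coef0 (bigD1_seq m0) ?msupp_uniq //= coefZ coefXn eqxx mulr1.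
rewrite big_seq_cond big1 ?addr0; last first.
  move=> m /andP[min nm]; rewrite coefZ coefXn.
  case: eqP => [ek|]; last by rewrite mulr0.
  exfalso; move/negP: nm; apply; apply/eqP/mnmP => i.
  exact: (@baseD_inj D n (fun i => m i) (fun i => m0 i) (fun i => hlt m i min) (fun i => hlt m0 i m0in) (esym ek) i).
by move=> h0; move: m0in; rewrite mcoeff_msupp h0 eqxx.
Qed.

Local Notation S := [tuple mesym n R i.+1 | i < n].

Lemma mesym_eval (q : 'I_n -> R) k : (mesym n R k).@[q] = esum q k.
Proof.
rewrite mesymE raddf_sum /=; apply: eq_bigr => h _.
rewrite mevalX (big_mkcond (fun i => i \in h)) /=; apply: eq_bigr => i _.
by rewrite mnmE; case: (i \in h).
Qed.

Lemma uvec_comp (T : {mpoly R[n]}) p : T.@[uvec p] = (T \mPo S).@[sq p].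
Proof.
rewrite comp_mpoly_meval; apply: meval_eq => i.
by rewrite tnth_map tnth_ord_tuple mesym_eval /uvec u_poly_eval.
Qed.

Lemma uvec_unique (T : {mpoly R[n]}) :
  (forall p, (forall s, p s != 0) -> T.@[uvec p] = 0) -> T = 0.
Proof.
move=> hT; apply: msym_fundamental_un0.
apply: (@kron_zero _ (fun c => (c.+1 ^ 2)%:R)).
  move=> c1 c2 /eqP; rewrite eqr_nat eqn_exp2r // => /eqP [] //.
move=> c.
pose p := fun i : 'I_n => (c.+1)%:R ^+ (msize (T \mPo S) ^ i) : R.
have := hT p; rewrite uvec_comp => h.
rewrite -h; last by move=> s; rewrite expf_neq0 // pnatr_eq0.
apply: meval_eq => i; rewrite /sq /p -exprM mulnC exprM natrX //.
Qed.

End Kron.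

Section D.
Variable R : numFieldType.
Variable n : nat.

Lemma Uv_deriv k (m : 'I_n) : (Uv R n k)^`M(m) = (k == m.+1)%:R.
Proof.
case: k => [|k]; first by rewrite /Uv /Uvar eqxx -mpolyC1 mderivC.
rewrite /Uv /Uvar /= raddf_sum /= eqSS.
case: (eqVneq k m) => [->|km].
  rewrite (big_pred1 m) ?mderivXU_eq // => m' /=.
rewrite big1 // => m' /=; rewrite eqz_nat eqSS => /eqP e.
by rewrite mderivXU_neq //; apply: contra_neq km => <-; rewrite e.
Qed.

Lemma Uvar_neg (z : int) : (z < 0)%R -> Uvar R n z = 0.
Proof.
move=> hz; rewrite /Uvar; have -> : (z == 0) = false by apply/negbTE; rewrite ltr0_neq0.
rewrite big_pred0 // => m; apply/negbTE; apply/eqP => e.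
by move: hz; rewrite -e.
Qed.

Lemma castZ (x : int) (k : nat) : x = k%:Z -> (x%:~R : R) = k%:R.
Proof. by move=> ->. Qed.

Lemma castZ2 (c : nat) (x : int) (k : nat) : (c%:Z * x) = k%:Z -> (c%:R : R) * x%:~R = k%:R.
Proof. move=> h. rewrite -[c%:R]/((c%:Z)%:~R : R) -intrM h //. Qed.

Lemma natr_scale (b : bool) (P : {mpoly R[n]}) : P * (b%:R) = ((b%:R : R) *: P).
Proof. by rewrite mulr_natr scaler_nat. Qed.

Lemma natl_scale (b : bool) (P : {mpoly R[n]}) : (b%:R) * P = ((b%:R : R) *: P).
Proof. by rewrite mulr_natl scaler_nat. Qed.

Lemma Hp_deriv a b (m0 : 'I_n) : m0.+1 = n.-1 -> (a < n)%N -> (b < n)%N ->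
  (Hp R n a b)^`M(m0) = eta_formula R n a.+1 b.+1.
Proof.
move=> hm ha hb.
rewrite /Hp mderivZ mderivD mderivZ mderivM !Uv_deriv raddf_sum /= hm.
have e1 : cA R n a b *: ((a == n.-1)%:R * Uv R n b + Uv R n a * (b == n.-1)%:R) =
   (cA R n a b * (b == n.-1)%:R) *: Uv R n a.
  case: (eqVneq a n.-1) => [ea|na].
    have h1 : ((n%:Z - a%:Z) * (n%:Z - b%:Z) - (n%:Z - b%:Z)) = 0.
      have -> : (n%:Z - a%:Z) = 1 by lia.
      by rewrite mul1r subrr.
    by rewrite /cA h1 !mul0r !scale0r.
  by rewrite mul0r add0r natr_scale scalerA.
rewrite e1.
have e2 : \sum_(i < a) (cT R a b i *: (Uv R n (a - i.+1) * Uv R n (b + i.+1)))^`M(m0)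
   = \sum_(i < a) (cT R a b i * ((b + i.+1)%N == n.-1)%:R) *: Uv R n (a - i.+1).
  apply: eq_bigr => t _; rewrite mderivZ mderivM !Uv_deriv hm.
  have -> : ((a - t.+1)%N == n.-1) = false.
    by apply/negbTE; apply/eqP; have := ltn_ord t; lia.
  by rewrite mul0r add0r natr_scale scalerA.
rewrite e2 /eta_formula.
case: (eqVneq b n.-1) => [eb|nb].
  rewrite big1 ?addr0; last first.
    move=> t _; have -> : ((b + t.+1)%N == n.-1) = false by apply/negbTE; apply/eqP; lia.
    by rewrite mulr0 scale0r.
  rewrite mulr1 scalerA.
  have -> : (a.+1%:Z + b.+1%:Z - n%:Z - 1) = a%:Z by lia.
  congr (_ *: _); rewrite /cA; apply: castZ2; lia.
rewrite mulr0 scale0r add0r.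
case: (ltnP (n.-1 - b.+1) a) => ht.
  rewrite (bigD1 (Ordinal ht)) //= big1 ?addr0; last first.
    move=> t tne; have -> : ((b + t.+1)%N == n.-1) = false.
      apply/negbTE; apply: contra tne => /eqP e; apply/eqP/val_inj => /=; lia.
    by rewrite mulr0 scale0r.
  have -> : ((b + (n.-1 - b.+1).+1)%N == n.-1) = true by apply/eqP; lia.
  rewrite mulr1 scalerA.
  have -> : (a.+1%:Z + b.+1%:Z - n%:Z - 1) = (a - (n.-1 - b.+1).+1)%N%:Z by lia.
  congr (_ *: _); rewrite /cT; apply: castZ2; lia.
rewrite big1 ?scaler0; last first.
  move=> t _; have -> : ((b + t.+1)%N == n.-1) = false.
    by apply/negbTE; apply/eqP; have := ltn_ord t; lia.
  by rewrite mulr0 scale0r.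
by rewrite Uvar_neg ?scaler0 //; lia.
Qed.

End D.

Theorem mainTheorem8 (R : numFieldType) (n : nat) (hn : (2 <= n)%N)
    (G : 'I_n -> 'I_n -> {mpoly R[n]}) :
  (* G i j is g^{(i+1)(j+1)} viewed as a polynomial in u_1, ..., u_n *)
  (forall (i j : 'I_n) (p : 'I_n -> R), (forall s, p s != 0) ->
     (G i j).@[uvec p] = gfun i.+1 j.+1 p) ->
  let eta := \matrix_(i < n, j < n) (G i j)^`M(ord_nm1 hn) in
  [/\ (forall i j : 'I_n, eta i j = eta_formula R n i.+1 j.+1),
      (forall i j : 'I_n, (i.+1 + j.+1 < n.+1)%N -> eta i j = 0),
      (forall i j : 'I_n, (i.+1 + j.+1 = n.+1)%N -> eta i j = (4 * (n - 1))%:R),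
      (forall i j i' j' : 'I_n, (i + j = i' + j')%N -> eta i j = eta i' j')
    & \det eta != 0].
Proof.
move=> hG eta.
have GH (i j : 'I_n) : G i j = Hp R n i j.
  apply/eqP; rewrite -subr_eq0; apply/eqP; apply: uvec_unique => p hp.
  by rewrite mevalB hG // gfun_Hp // subrr.
have E1 (i j : 'I_n) : eta i j = eta_formula R n i.+1 j.+1.
  rewrite /eta mxE GH; apply: Hp_deriv => //=; lia.
have E2 (i j : 'I_n) : (i.+1 + j.+1 < n.+1)%N -> eta i j = 0.
  move=> h; rewrite E1 /eta_formula Uvar_neg ?scaler0 //; lia.
have E3 (i j : 'I_n) : (i.+1 + j.+1 = n.+1)%N -> eta i j = (4 * (n - 1))%:R.
  move=> h; rewrite E1 /eta_formula.
  have -> : (i.+1%:Z + j.+1%:Z - n%:Z - 1) = 0 by lia.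
  have -> : (4 * (2 * n - i.+1 - j.+1))%N = (4 * (n - 1))%N by lia.
  by rewrite /Uvar eqxx scaler_nat.
split => //.
- move=> i j i' j' h; rewrite !E1 /eta_formula.
  have -> : (2 * n - i.+1 - j.+1)%N = (2 * n - i'.+1 - j'.+1)%N by lia.
  have -> : (i.+1%:Z + j.+1%:Z - n%:Z - 1) = (i'.+1%:Z + j'.+1%:Z - n%:Z - 1) by lia.
  by [].
pose s := perm (@rev_ord_inj n).
pose B := col_perm s eta.
have hB : \det B = \det eta * \det (perm_mx s^-1) by rewrite /B col_permE det_mulmx.
have tB : is_trig_mx B.
  apply/is_trig_mxP => i j hij; rewrite /B mxE permE E2 //=; have := ltn_ord j; lia.
have dB : \det B = ((4 * (n - 1))%:R) ^+ n.
  rewrite det_trig // (eq_bigr (fun _ => (4 * (n - 1))%:R)) ?prodr_const ?card_ord // => i _.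
  by rewrite /B mxE permE E3 //=; have := ltn_ord i; lia.
have nz : ((4 * (n - 1))%:R ^+ n : {mpoly R[n]}) != 0.
  rewrite -natrX; apply/eqP => h.
  have := congr1 (meval (fun _ : 'I_n => (0 : R))) h.
  rewrite rmorph_nat meval0 => /eqP; rewrite pnatr_eq0 expn_eq0 muln_eq0 /=.
  by move=> /andP[/eqP h1 _]; lia.
apply/eqP => h0; move: nz; by rewrite -dB hB h0 mul0r eqxx.
Qed.
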